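(* Let $K$ be an algebraically closed field of characteristic $p>0$, $p\neq 2$, and $n\geq 4$. Let $G_\psi\subset\mathrm{Aut}_0K[x_1,\ldots,x_n]$ be the subgroup generated by $\mathrm{GL}_n(K)$ and the automorphism $\psi: x_1\mapsto x_1+x_2x_3$, $x_k\mapsto x_k$ ($k\neq 1$). Then $G_\psi$ contains: (i) for each $i=1,\ldots,n$, the automorphism $\psi_i: x_i\mapsto x_i+x_{i+1}x_{i+2}$, $x_k\mapsto x_k$ ($k\neq i$), with indices taken cyclically modulo $n$; and (ii) every automorphism $\varphi_{i,j,k,\beta}: x_i\mapsto x_i+\beta x_j^k$, $x_l\mapsto x_l$ ($l\neq i$), where $k\geq 1$, $\beta\in K$, $i,j\in\{1,\ldots,n\}$, $j\neq i$.
   Context: $\mathrm{Aut}_0 K[x_1,\ldots,x_n]$ is the group of origin-preserving $K$-algebra automorphisms of $K[x_1,\ldots,x_n]$; $\mathrm{GL}_n(K)$ is its subgroup of linear automorphisms $x_i\mapsto\sum_j a_{ij}x_j$. *)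

(* Defs.v *)
From HB Require Import structures.
From mathcomp Require Import all_boot all_order all_algebra.
From mathcomp Require Import mpoly.
Set Implicit Arguments. Unset Strict Implicit. Unset Printing Implicit Defensive.
Import GRing.Theory.
Local Open Scope ring_scope.

(* A K-algebra endomorphism of K[x_0,...,x_{n-1}] is represented by the
   n-tuple of images of the variables (0-based indices). *)
Definition endo (K : fieldType) (n : nat) := n.-tuple {mpoly K[n]}.

Definition eid (K : fieldType) (n : nat) : endo K n := [tuple 'X_i | i < n].

(* composition of algebra maps: (ecomp f g) = phi_f o phi_g,
   i.e. x_i |-> phi_f (g_i) = g_i(f_0,...,f_{n-1}) *)
Definition ecomp (K : fieldType) (n : nat) (f g : endo K n) : endo K n :=
  [tuple comp_mpoly f (tnth g i) | i < n].

Inductive gen_by (K : fieldType) (n : nat) (S : endo K n -> Prop) : endo K n -> Prop :=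
  | gen_base f : S f -> gen_by S f
  | gen_id : gen_by S (eid K n)
  | gen_comp f g : gen_by S f -> gen_by S g -> gen_by S (ecomp f g)
  | gen_inv f g : gen_by S f -> ecomp f g = eid K n -> ecomp g f = eid K n ->
                  gen_by S g.

Definition linear_endo (K : fieldType) (n : nat) (A : 'M[K]_n) : endo K n :=
  [tuple \sum_(j < n) A i j *: 'X_j | i < n].

Definition is_GL (K : fieldType) (n : nat) (f : endo K n) : Prop :=
  exists A : 'M[K]_n, A \in unitmx /\ f = linear_endo A.

Definition elem_endo (K : fieldType) (n : nat) (i : 'I_n) (q : {mpoly K[n]}) : endo K n :=
  [tuple (if k == i then 'X_k + q else 'X_k) | k < n].

Definition cyc (n : nat) (i : 'I_n) (s : nat) : 'I_n :=
  Ordinal (@ltn_pmod (i + s) n (leq_ltn_trans (leq0n i) (ltn_ord i))).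

Definition psi_i (K : fieldType) (n : nat) (i : 'I_n) : endo K n :=
  elem_endo i ('X_(cyc i 1) * 'X_(cyc i 2)).

Definition G_psi (K : fieldType) (n : nat) : endo K n -> Prop :=
  @gen_by K n (fun f => is_GL f \/ (exists i0 : 'I_n, i0 = 0 :> nat /\ f = @psi_i K n i0)).

(* Main.v *)
Require Import Defs.
From HB Require Import structures.
From mathcomp Require Import all_boot all_order all_algebra all_fingroup.
From mathcomp Require Import mpoly.
From mathcomp Require Import zify.
Set Implicit Arguments. Unset Strict Implicit. Unset Printing Implicit Defensive.
Import GRing.Theory.
Local Open Scope ring_scope.

Section S.
Variables (K : fieldType) (n : nat).
Implicit Types (f g : endo K n) (q r s t : {mpoly K[n]}).

Lemma compX f (k : 'I_n) : comp_mpoly f 'X_k = tnth f k.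
Proof. by rewrite comp_mpolyXU (tnth_nth 0). Qed.

Lemma tnth_ecomp f g k : tnth (ecomp f g) k = comp_mpoly f (tnth g k).
Proof. by rewrite tnth_mktuple. Qed.

Lemma tnth_elem i q k : tnth (elem_endo i q) k = if k == i then 'X_k + q else 'X_k.
Proof. by rewrite tnth_mktuple. Qed.

Lemma tnth_eid k : tnth (eid K n) k = 'X_k.
Proof. by rewrite tnth_mktuple. Qed.

Definition indep i q := forall r, comp_mpoly (elem_endo i r) q = q.

Lemma indepX i (m : 'I_n) : m != i -> indep i 'X_m.
Proof. by move=> mi r; rewrite compX tnth_elem (negbTE mi). Qed.
Lemma indepD i q r : indep i q -> indep i r -> indep i (q + r).
Proof. by move=> h1 h2 u; rewrite rmorphD /= h1 h2. Qed.
Lemma indepM i q r : indep i q -> indep i r -> indep i (q * r).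
Proof. by move=> h1 h2 u; rewrite rmorphM /= h1 h2. Qed.
Lemma indepN i q : indep i q -> indep i (- q).
Proof. by move=> h1 u; rewrite rmorphN /= h1. Qed.
Lemma indepZ i c q : indep i q -> indep i (c *: q).
Proof. by move=> h1 u; rewrite comp_mpolyZ h1. Qed.
Lemma indepXn i q d : indep i q -> indep i (q ^+ d).
Proof. by move=> h1 u; rewrite rmorphXn /= h1. Qed.

Lemma elem_add i q r : indep i r -> ecomp (elem_endo i q) (elem_endo i r) = elem_endo i (q + r).
Proof.
move=> hr; apply: eq_from_tnth => k; rewrite tnth_ecomp !tnth_elem.
case: (eqVneq k i) => [->|ki]; last by rewrite compX tnth_elem (negbTE ki).
by rewrite rmorphD /= hr compX tnth_elem eqxx addrA.
Qed.

Lemma elem0 i : elem_endo i 0 = eid K n.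
Proof. by apply: eq_from_tnth => k; rewrite tnth_elem tnth_eid addr0; case: (k == i). Qed.

Lemma conj_elem i j s t : i != j -> indep i s -> indep j s ->
  ecomp (elem_endo j s) (ecomp (elem_endo i t) (elem_endo j (- s)))
  = elem_endo i (comp_mpoly (elem_endo j s) t).
Proof.
move=> ij hi hj; apply: eq_from_tnth => k.
rewrite tnth_ecomp tnth_ecomp !tnth_elem.
case: (eqVneq k j) => [->|kj].
  rewrite eq_sym (negbTE ij) rmorphD rmorphN /= hi compX tnth_elem eq_sym (negbTE ij).
  by rewrite rmorphD rmorphN /= hj compX tnth_elem eqxx addrK.
case: (eqVneq k i) => [->|ki].
  by rewrite compX tnth_elem eqxx rmorphD /= compX tnth_elem (negbTE ij).
by rewrite compX tnth_elem (negbTE ki) compX tnth_elem (negbTE kj).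
Qed.


Lemma sum_delta (u : 'I_n) : \sum_(l < n) ((u == l)%:R : K) *: ('X_l : {mpoly K[n]}) = 'X_u.
Proof.
rewrite (bigD1 u) //= eqxx scale1r big1 ?addr0 // => l /negbTE lu.
by rewrite eq_sym lu scale0r.
Qed.

Definition pend (s : 'S_n) : endo K n := [tuple 'X_(s k) | k < n].

Lemma pend_lin (p : 'S_n) : pend p = linear_endo (perm_mx p).
Proof.
apply: eq_from_tnth => k; rewrite !tnth_mktuple -sum_delta.
by apply: eq_bigr => l _; rewrite perm_mxEsub !mxE.
Qed.

Lemma elem_lin (a b : 'I_n) (c : K) : a != b ->
  elem_endo a (c *: 'X_b) = linear_endo (1%:M + c *: delta_mx a b).
Proof.
move=> ab; apply: eq_from_tnth => k; rewrite !tnth_mktuple.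
under eq_bigr do rewrite !mxE scalerDl.
rewrite big_split /= -sum_delta.
under [X in _ = _ + X]eq_bigr do rewrite mulrC -scalerA.
case: (eqVneq k a) => [->|ka] /=.
  congr (_ + _); rewrite -(sum_delta b) scaler_sumr; apply: eq_bigr => l _.
  by rewrite scalerA [in RHS]scalerA [c * _]mulrC eq_sym.
by under [X in _ = _ + X]eq_bigr do rewrite scale0r; rewrite big1_eq addr0.
Qed.

Lemma elem_unit (a b : 'I_n) (c : K) : a != b -> (1%:M + c *: delta_mx a b : 'M[K]_n) \in unitmx.
Proof.
move=> ab; have [] := @mulmx1_unit _ _ (1%:M + c *: delta_mx a b) (1%:M - c *: delta_mx a b).
  rewrite mulmxDl mulmxBr !mulmx1 mul1mx mulmxBr mulmx1 -scalemxAl -scalemxAr mul_delta_mx_0 1?eq_sym //.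
  by rewrite !scaler0 subr0 addrNK.
by [].
Qed.

Definition G := @G_psi K n.

Lemma G_comp f g : G f -> G g -> G (ecomp f g).
Proof. exact: gen_comp. Qed.

Lemma G_lin A : A \in unitmx -> G (linear_endo A).
Proof. by move=> hA; apply: gen_base; left; exists A. Qed.

Lemma G_pend p : G (pend p).
Proof. by rewrite pend_lin; apply: G_lin; apply: unitmx_perm. Qed.

Lemma G_elemlin (a b : 'I_n) (c : K) : a != b -> G (elem_endo a (c *: 'X_b)).
Proof. by move=> ab; rewrite elem_lin //; apply: G_lin; apply: elem_unit. Qed.

Lemma G_elemN i q : indep i q -> G (elem_endo i q) -> G (elem_endo i (- q)).
Proof.
move=> hq Gq; apply: (gen_inv Gq).
  by rewrite elem_add ?subrr ?elem0 //; apply: indepN.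
by rewrite elem_add // addrC subrr elem0.
Qed.

Lemma G_elemD i q r : indep i r -> G (elem_endo i q) -> G (elem_endo i r) -> G (elem_endo i (q + r)).
Proof. by move=> hr Gq Gr; rewrite -elem_add //; apply: G_comp. Qed.

Lemma G_conj i j s t : i != j -> indep i s -> indep j s ->
  G (elem_endo j s) -> G (elem_endo i t) -> G (elem_endo i (comp_mpoly (elem_endo j s) t)).
Proof.
move=> ij hi hj Gs Gt; rewrite -conj_elem //; apply: G_comp => //; apply: G_comp => //.
by apply: G_elemN.
Qed.

Lemma pend_conj (p : 'S_n) i q :
  ecomp (ecomp (pend p) (elem_endo i q)) (pend (p^-1)%g) = elem_endo (p i) (comp_mpoly (pend p) q).
Proof.
apply: eq_from_tnth => k; rewrite tnth_ecomp tnth_mktuple compX tnth_ecomp tnth_elem tnth_elem.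
have -> : ((p^-1)%g k == i) = (k == p i).
  by apply/eqP/eqP => [<-|->]; rewrite ?permKV ?permK.
case: (k == p i); rewrite ?rmorphD /= compX tnth_mktuple permKV //.
Qed.

Lemma G_perm (p : 'S_n) i q : G (elem_endo i q) -> G (elem_endo (p i) (comp_mpoly (pend p) q)).
Proof. move=> Gq; rewrite -pend_conj; apply: G_comp; last exact: G_pend. apply: G_comp => //; exact: G_pend. Qed.


Definition T (i j l : 'I_n) := G (elem_endo i ('X_j * 'X_l)).

Lemma T_perm (p : 'S_n) i j l : T i j l -> T (p i) (p j) (p l).
Proof.
move=> h; have := G_perm p h.
by rewrite rmorphM /= !compX !tnth_mktuple.
Qed.

Lemma T_all i0 j0 l0 : i0 != j0 -> i0 != l0 -> j0 != l0 -> T i0 j0 l0 ->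
  forall i j l, i != j -> i != l -> j != l -> T i j l.
Proof.
move=> h1 h2 h3 h0 i j l ij il jl.
have := T_perm (tperm i0 i) h0; rewrite tpermL.
set a := tperm i0 i j0; set b := tperm i0 i l0.
have ia : i != a by rewrite -[i](tpermL i0 i) /a (inj_eq perm_inj).
have ib : i != b by rewrite -[i](tpermL i0 i) /b (inj_eq perm_inj).
have ab : a != b by rewrite /a /b (inj_eq perm_inj).
move=> /(T_perm (tperm a j)); rewrite tpermL tpermD 1?eq_sym //.
set b' := tperm a j b.
have Hi : tperm a j i = i by rewrite tpermD // eq_sym.
have ib' : i != b' by rewrite -[i in i != _]Hi /b' (inj_eq perm_inj).
have jb' : j != b' by rewrite -[j](tpermL a j) /b' (inj_eq perm_inj).
move=> /(T_perm (tperm b' l)); rewrite tpermL tpermD 1?eq_sym // tpermD // eq_sym //.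
Qed.


Lemma pick2 (i j : 'I_n) : (4 <= n)%N -> i != j ->
  exists l m : 'I_n, [/\ l != i, l != j, m != i, m != j & l != m].
Proof.
move=> n4 ij.
have : (1 < #|~: [set i; j]|)%N.
  have := cardsC [set i; j]; rewrite cards2 ij card_ord => h.
  by rewrite -(ltn_add2l 2) h.
case/card_gt1P => l [m [hl hm lm]].
move: hl hm; rewrite !inE !negb_or => /andP[li lj] /andP[mi mj].
by exists l, m.
Qed.

Lemma cyc_val (i : 'I_n) (s : nat) : val (cyc i s) = ((i + s) %% n)%N.
Proof. by []. Qed.


Lemma cyc_neq (i : 'I_n) : (4 <= n)%N ->
  [/\ i != cyc i 1, i != cyc i 2 & cyc i 1 != cyc i 2].
Proof.
move=> n4; have := ltn_ord i.
have e (s : nat) : (s < n)%N -> ((i + s) %% n)%N = if (i + s < n)%N then (i + s)%N else (i + s - n)%N.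
  move=> sn; case: ltnP => h; first by rewrite modn_small.
  rewrite -{1}(subnK h) modnDr modn_small //; have := ltn_ord i; lia.
have e1 := e 1%N; have e2 := e 2%N.
split; apply/eqP => /(congr1 val) /=.
- rewrite e1; last lia. case: ifP; lia.
- rewrite e2; last lia. case: ifP; lia.
- rewrite e1 ?e2; try lia. case: ifP; case: ifP; lia.
Qed.

Lemma G_T (i j l : 'I_n) : (4 <= n)%N -> i != j -> i != l -> j != l -> T i j l.
Proof.
move=> n4; have n0 : (0 < n)%N by lia.
pose i0 : 'I_n := Ordinal n0.
have [h1 h2 h3] := cyc_neq i0 n4.
apply: (T_all h1 h2 h3).
by apply: gen_base; right; exists i0.
Qed.

Lemma G_pow (d : nat) : (4 <= n)%N -> forall (i j : 'I_n) (beta : K), j != i ->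
  G (elem_endo i (beta *: 'X_j ^+ d.+1)).
Proof.
move=> n4; elim: d => [|d IH] i j beta ji.
  by rewrite expr1; apply: G_elemlin; rewrite eq_sym.
have ij : i != j by rewrite eq_sym.
have [l [m [li lj mi mj lm]]] := pick2 n4 ij.
set s := beta *: 'X_j ^+ d.+1.
have indj a : j != a -> indep a s.
  by move=> ja; apply: indepZ; apply: indepXn; apply: indepX.
have il : i != l by rewrite eq_sym.
have im : i != m by rewrite eq_sym.
have jl : j != l by rewrite eq_sym.
have jm : j != m by rewrite eq_sym.
have G1 : G (elem_endo i ('X_l * 'X_m)) by apply: G_T.
have G2 := G_conj il (indj i ji) (indj l jl) (IH l j beta jl) G1.
have ml : m != l by rewrite eq_sym.
rewrite rmorphM /= !compX !tnth_elem eqxx (negbTE ml) in G2.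
have indlm : indep i ('X_l * 'X_m) by apply: indepM; apply: indepX.
have G3 := G_elemD (indepN indlm) G2 (G_elemN indlm G1).
have E3 : ('X_l + s) * 'X_m - 'X_l * 'X_m = s * 'X_m by rewrite mulrDl addrAC subrr add0r.
rewrite E3 in G3.
have inds : indep i (s * 'X_m) by apply: indepM; [apply: indj|apply: indepX].
have G4 := G_conj im (indepZ 1 (indepX ji)) (indepZ 1 (indepX jm)) (G_elemlin 1 mj) G3.
rewrite rmorphM /= compX tnth_elem eqxx (indj m jm) in G4.
have G5 := G_elemD (indepN inds) G4 (G_elemN inds G3).
have E5 : s * ('X_m + 1 *: 'X_j) - s * 'X_m = beta *: 'X_j ^+ d.+2.
  by rewrite mulrDr addrAC subrr add0r scale1r /s -scalerAl -exprSr.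
by rewrite -E5.
Qed.

End S.

Theorem mainTheorem4 (K : closedFieldType) (p : nat) (n : nat)
  (hp : p \in [pchar K]) (hp2 : p != 2%N) (hn : (4 <= n)%N) :
  (forall i : 'I_n, @G_psi K n (@psi_i K n i)) /\
  (forall (i j : 'I_n) (k : nat) (beta : K), (1 <= k)%N -> j != i ->
     @G_psi K n (@elem_endo K n i (beta *: 'X_j ^+ k))).
Proof.
split.
- move=> i; have [h1 h2 h3] := cyc_neq i hn.
  exact: (@G_T K n i (cyc i 1) (cyc i 2) hn h1 h2 h3).
- move=> i j [|d] beta // _ ji.
  exact: (@G_pow K n d hn i j beta ji).
Qed.
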